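(* Let $\mathbf{v}_1,\ldots,\mathbf{v}_k$ be orthogonal unit vectors in $\mathbb{R}^k$, let $F:\mathbb{R}^{kn}\to\mathbb{R}$ be \[ F(\mathbf{w}_1,\ldots,\mathbf{w}_n)=\mathbb{E}_{\mathbf{x}\sim\mathcal{N}(\mathbf{0},I_k)}\left[\frac{1}{2}\left(\sum_{i=1}^{n}[\mathbf{w}_i^\top\mathbf{x}]_+-\sum_{i=1}^{k}[\mathbf{v}_i^\top\mathbf{x}]_+\right)^2\right], \] and let $\mathbf{w}\in\mathbb{R}^{kn}$ and $\alpha>0$ be such that $F$ is thrice differentiable on an open set containing the closed ball of radius $\alpha$ centered at $\mathbf{w}$. For a unit vector $\mathbf{u}\in\mathbb{R}^{kn}$ and $t\in(0,\alpha]$, let $R_{\mathbf{w},\mathbf{u},t}$ be the Lagrange remainder, i.e. the number with \[ F(\mathbf{w}+t\mathbf{u})=F(\mathbf{w})+t\nabla F(\mathbf{w})^\top\mathbf{u}+\tfrac{1}{2}t^2\mathbf{u}^\top\nabla^2F(\mathbf{w})\mathbf{u}+\tfrac{1}{6}t^3R_{\mathbf{w},\mathbf{u},t} \] (by Taylor's theorem $R_{\mathbf{w},\mathbf{u},t}=\sum_{i_1,i_2,i_3}\frac{\partial^3 F}{\partial w_{i_1}\partial w_{i_2}\partial w_{i_3}}(\mathbf{w}+\xi\mathbf{u})u_{i_1}u_{i_2}u_{i_3}$ for some $\xi\in(0,t)$). Assume that for some $\epsilon,B>0$ we have $\|\nabla F(\mathbf{w})\|\le\epsilon$ and $\sup_{t\in(0,\alpha],\,\|\mathbf{u}\|=1}|R_{\mathbf{w},\mathbf{u},t}|\le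 B$. Let $\lambda_{\min}>0$ be the smallest eigenvalue of $\nabla^2F(\mathbf{w})$ (assumed positive), and let \[ r=\frac{3\lambda_{\min}-\sqrt{9\lambda_{\min}^2-25B\epsilon}}{2B}. \] If $9\lambda_{\min}^2-25B\epsilon\ge 0$ and $r<\alpha$, then $F$ has a local minimum at distance at most $r$ from $\mathbf{w}$.
   Context: $[z]_+=\max\{0,z\}$. A local minimum of $F$ is a point $\mathbf{w}^*$ with $F(\mathbf{w}^* )\le F(\mathbf{w}')$ for all $\mathbf{w}'$ in some open neighborhood of $\mathbf{w}^*$. Norms are Euclidean. *)

(* Defs.v *)
From HB Require Import structures.
From mathcomp Require Import all_boot all_order all_algebra.
From mathcomp Require Import all_classical all_reals all_analysis.
From mathcomp Require Import normal_distribution.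
Set Implicit Arguments. Unset Strict Implicit. Unset Printing Implicit Defensive.
Import Order.TTheory GRing.Theory Num.Theory.
Import numFieldNormedType.Exports.
Local Open Scope classical_set_scope.
Local Open Scope ring_scope.

Section Defs.
Variable R : realType.

Definition relu (z : R) : R := Num.max 0 z.

(* Expectation of a nonnegative (extended-real valued) function of
   x ~ N(0, I_k), x represented as a k-tuple of reals; computed as the
   iterated integral against k independent standard normal laws
   (equal to the integral against the product measure by Tonelli). *)
Fixpoint gauss_int (k : nat) : (k.-tuple R -> \bar R) -> \bar R :=
  match k with
  | 0 => fun g => g [tuple]
  | k'.+1 => fun g =>
      (\int[normal_prob 0 1]_x gauss_int (fun t : k'.-tuple R => g [tuple of x :: t]))%E
  end.

Definition dotx (k : nat) (w : 'rV[R]_k) (x : k.-tuple R) : R :=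
  \sum_(j < k) w 0 j * tnth x j.

Definition Fobj (k n : nat) (v : 'M[R]_(k, k)) (w : 'M[R]_(n, k)) : R :=
  fine (gauss_int (fun x : k.-tuple R =>
    (2^-1 * (\sum_(i < n) relu (dotx (row i w) x)
             - \sum_(i < k) relu (dotx (row i v) x)) ^+ 2)%:E)).

Definition enorm (m p : nat) (M : 'M[R]_(m, p)) : R :=
  Num.sqrt (\sum_(i < m) \sum_(j < p) M i j ^+ 2).

Definition grad (m p : nat) (F : 'M[R]_(m, p) -> R) (w : 'M[R]_(m, p))
  : 'M[R]_(m, p) := \matrix_(i, j) ('D_(delta_mx i j) F w).

Definition mdot (m p : nat) (A B : 'M[R]_(m, p)) : R :=
  \sum_(i < m) \sum_(j < p) A i j * B i j.

Definition ebasis (m p : nat) (a : 'I_(m * p)) : 'M[R]_(m, p) :=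
  vec_mx (delta_mx 0 a).

Definition hess (m p : nat) (F : 'M[R]_(m, p) -> R) (w : 'M[R]_(m, p))
  : 'M[R]_(m * p) :=
  \matrix_(a, b) ('D_(ebasis b) ('D_(ebasis a) F) w).

Definition quadf (m p : nat) (H : 'M[R]_(m * p)) (u : 'M[R]_(m, p)) : R :=
  (mxvec u *m H *m (mxvec u)^T) 0 0.

(* In finite dimension,
   differentiability of x |-> DF(x) is equivalent to differentiability of
   x |-> DF(x) u for each u, and similarly at order 3. *)
Definition thrice_diff_on (m p : nat) (F : 'M[R]_(m, p) -> R)
  (U : set 'M[R]_(m, p)) : Prop :=
  forall x, U x ->
    [/\ differentiable F x,
        (forall u, differentiable ('D_u F) x) &
        (forall u1 u2, differentiable ('D_u2 ('D_u1 F)) x)].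

(* Lagrange remainder R_{w,u,t}, defined by
   F(w+tu) = F(w) + t grad.u + 1/2 t^2 u^T H u + 1/6 t^3 R *)
Definition lagrange_rem (m p : nat) (F : 'M[R]_(m, p) -> R)
  (w u : 'M[R]_(m, p)) (t : R) : R :=
  6 / t ^+ 3 * (F (w + t *: u) - F w - t * mdot (grad F w) u
                - 2^-1 * t ^+ 2 * quadf (hess F w) u).

Definition local_min (m p : nat) (F : 'M[R]_(m, p) -> R) (ws : 'M[R]_(m, p))
  : Prop :=
  exists2 delta : R, 0 < delta &
    forall w', enorm (w' - ws) < delta -> F ws <= F w'.

End Defs.

(* Main.v *)
Require Import Defs.
From HB Require Import structures.
From mathcomp Require Import all_boot all_order all_algebra.
From mathcomp Require Import all_classical all_reals all_analysis.
From mathcomp Require Import ring lra.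
Import Order.TTheory GRing.Theory Num.Theory.
Import numFieldNormedType.Exports.
Local Open Scope classical_set_scope.
Local Open Scope ring_scope.
Set Implicit Arguments. Unset Strict Implicit. Unset Printing Implicit Defensive.
Section P1.
Variable R : realType.

Lemma cs (I : finType) (a b : I -> R) :
  (\sum_i a i * b i) ^+ 2 <= (\sum_i a i ^+ 2) * (\sum_i b i ^+ 2).
Proof.
have H0 : 0 <= \sum_i \sum_j (a i * b j - a j * b i) ^+ 2.
  by apply: sumr_ge0 => i _; apply: sumr_ge0 => j _; exact: sqr_ge0.
have E : \sum_i \sum_j (a i * b j - a j * b i) ^+ 2 =
  2 * ((\sum_i a i ^+ 2) * (\sum_i b i ^+ 2) - (\sum_i a i * b i) ^+ 2).
  have E1 : \sum_i \sum_j (a i * b j - a j * b i) ^+ 2 =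
     \sum_i \sum_j (a i ^+ 2 * b j ^+ 2) + \sum_i \sum_j (a j ^+ 2 * b i ^+ 2)
     - 2 * \sum_i \sum_j (a i * b i) * (a j * b j).
    rewrite mulr_sumr -!big_split -sumrB /=; apply: eq_bigr => i _.
    rewrite mulr_sumr -!big_split -sumrB /=; apply: eq_bigr => j _.
    ring.
  rewrite E1 [X in _ + X - _]exchange_big /=.
  rewrite expr2 mulr_suml mulr_suml.
  under [X in _ = 2 * (_ - X)]eq_bigr do rewrite mulr_sumr.
  under [X in _ = 2 * (X - _)]eq_bigr do rewrite mulr_sumr.
  ring.
by move: H0; rewrite E pmulr_rge0 // subr_ge0.
Qed.

End P1.
Section P2.
Variable R : realType.
Variables m p : nat.
Implicit Types A B : 'M[R]_(m, p).

Definition ns A := \sum_i \sum_j A i j ^+ 2.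

Lemma ns_ge0 A : 0 <= ns A.
Proof. by apply: sumr_ge0 => i _; apply: sumr_ge0 => j _; exact: sqr_ge0. Qed.

Lemma enormE A : enorm A = Num.sqrt (ns A).
Proof. by []. Qed.

Lemma enorm_ge0 A : 0 <= enorm A.
Proof. exact: sqrtr_ge0. Qed.

Lemma sqr_enorm A : enorm A ^+ 2 = ns A.
Proof. by rewrite enormE sqr_sqrtr // ns_ge0. Qed.

Lemma mdot_sq A B : mdot A B ^+ 2 <= ns A * ns B.
Proof.
rewrite /mdot /ns !pair_bigA /=.
exact: cs.
Qed.

Lemma mdot_le A B : mdot A B <= enorm A * enorm B.
Proof.
rewrite !enormE -sqrtrM ?ns_ge0 //.
apply: le_trans (ler_norm _) _.
rewrite -sqrtr_sqr; apply: ler_wsqrtr; exact: mdot_sq.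
Qed.

Lemma ns_add A B : ns (A + B) = ns A + 2 * mdot A B + ns B.
Proof.
rewrite /ns /mdot mulr_sumr -!big_split /=; apply: eq_bigr => i _.
rewrite mulr_sumr -!big_split /=; apply: eq_bigr => j _.
rewrite mxE; ring.
Qed.

Lemma enormD A B : enorm (A + B) <= enorm A + enorm B.
Proof.
rewrite -(ger0_norm (enorm_ge0 (A + B))) -[X in _ <= X]ger0_norm;
  last by rewrite addr_ge0 ?enorm_ge0.
rewrite -ler_sqr ?nnegrE ?normr_ge0 //.
rewrite !real_normK ?realE ?enorm_ge0 ?addr_ge0 ?enorm_ge0 //.
rewrite sqr_enorm ns_add sqrrD !sqr_enorm lerD2r lerD2l.
rewrite -mulr_natl. have := mdot_le A B. lra.
Qed.

Lemma nsZ c A : ns (c *: A) = c ^+ 2 * ns A.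
Proof.
rewrite /ns mulr_sumr; apply: eq_bigr => i _; rewrite mulr_sumr.
by apply: eq_bigr => j _; rewrite mxE exprMn.
Qed.

Lemma enormZ c A : enorm (c *: A) = `|c| * enorm A.
Proof. by rewrite !enormE nsZ sqrtrM ?sqr_ge0 // sqrtr_sqr. Qed.

Lemma enormN A : enorm (- A) = enorm A.
Proof. by rewrite -scaleN1r enormZ normrN normr1 mul1r. Qed.

Lemma enormB A B : enorm (A - B) = enorm (B - A).
Proof. by rewrite -enormN opprB. Qed.

Lemma entry_le A i j : A i j ^+ 2 <= ns A.
Proof.
rewrite /ns (bigD1 i) //= (bigD1 j) //= -addrA lerDl.
apply: addr_ge0; first by apply: sumr_ge0 => *; exact: sqr_ge0.
by apply: sumr_ge0 => *; apply: sumr_ge0 => *; exact: sqr_ge0.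
Qed.

Lemma entry_norm_le A i j : `|A i j| <= enorm A.
Proof.
rewrite enormE -sqrtr_sqr; apply: ler_wsqrtr; exact: entry_le.
Qed.

Lemma entry_mx_norm A i j : `|A i j| <= `|A|.
Proof.
have -> : `|A| = mx_norm A by [].
rewrite mx_normrE.
by apply/bigmax_geP; right; exists (i, j).
Qed.

Lemma ns_mx_norm A : ns A <= (m * p)%:R * `|A| ^+ 2.
Proof.
rewrite /ns pair_bigA /=.
have -> : (m * p)%:R * `|A| ^+ 2 = \sum_(ij : 'I_m * 'I_p) `|A| ^+ 2.
  by rewrite sumr_const card_prod !card_ord mulr_natl.
apply: ler_sum => ij _; rewrite -real_normK ?num_real //.
by rewrite lerXn2r ?nnegrE ?normr_ge0 // entry_mx_norm.
Qed.

Lemma enorm_mx_norm A : enorm A <= Num.sqrt (m * p)%:R * `|A|.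
Proof.
rewrite enormE -(ger0_norm (normr_ge0 A)) -sqrtr_sqr -sqrtrM ?ler0n //.
apply: ler_wsqrtr. exact: ns_mx_norm.
Qed.

Lemma enorm_continuous : continuous (@enorm R m p).
Proof.
move=> x; apply/(@cvgrPdist_lt _ _ _ (nbhs x)) => e e0.
have C0 : 0 < Num.sqrt ((m * p)%:R : R) + 1.
  by apply: (lt_le_trans ltr01); rewrite lerDr sqrtr_ge0.
near=> z.
have h1 : `|enorm x - enorm z| <= enorm (x - z).
  have t1 : enorm x <= enorm (x - z) + enorm z.
    by have := enormD (x - z) z; rewrite subrK.
  have t2 : enorm z <= enorm (x - z) + enorm x.
    by have := enormD (z - x) x; rewrite subrK enormB.
  rewrite ler_norml; apply/andP; split; lra.
apply: (le_lt_trans h1); apply: (le_lt_trans (enorm_mx_norm _)).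
have h2 : `|x - z| < e / (Num.sqrt (m * p)%:R + 1).
  near: z; apply: cvgr_dist_lt => //; exact: divr_gt0.
apply: (@le_lt_trans _ _ ((Num.sqrt (m * p)%:R + 1) * `|x - z|)).
  by apply: ler_wpM2r; [exact: normr_ge0 | rewrite lerDl].
by rewrite mulrC -ltr_pdivlMr.
Unshelve. all: by end_near. Qed.

End P2.
Section P3.

Variable R : realType.
Variable N : nat.
Variable H : 'M[R]_N.
Hypothesis HT : forall a b, H a b = H b a.

Definition Bf (x y : 'rV[R]_N) := \sum_a \sum_b x 0 a * H a b * y 0 b.
Definition Df (x y : 'rV[R]_N) := \sum_a x 0 a * y 0 a.

Lemma qfE u : (u *m H *m u^T) 0 0 = Bf u u.
Proof.
rewrite mxE /Bf exchange_big /=; apply: eq_bigr => b _.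
by rewrite mxE mulr_suml; apply: eq_bigr => a _; rewrite mxE.
Qed.

Lemma sqE u : (u *m u^T) 0 0 = Df u u.
Proof. by rewrite mxE /Df; apply: eq_bigr => a _; rewrite mxE. Qed.

Lemma Bsym x y : Bf x y = Bf y x.
Proof.
rewrite /Bf exchange_big /=; apply: eq_bigr => a _; apply: eq_bigr => b _.
by rewrite HT; ring.
Qed.

Lemma Bexp x h s :
  Bf (x + s *: h) (x + s *: h) = Bf x x + 2 * s * Bf x h + s ^+ 2 * Bf h h.
Proof.
have -> : Bf (x + s *: h) (x + s *: h) =
   Bf x x + s * Bf x h + s * Bf h x + s ^+ 2 * Bf h h.
  rewrite /Bf !mulr_sumr -!big_split /=; apply: eq_bigr => a _.
  rewrite !mulr_sumr -!big_split /=; apply: eq_bigr => b _.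
  rewrite !mxE; ring.
rewrite (Bsym h x); ring.
Qed.

Lemma Dexp x h s :
  Df (x + s *: h) (x + s *: h) = Df x x + 2 * s * Df x h + s ^+ 2 * Df h h.
Proof.
rewrite /Df !mulr_sumr -!big_split /=; apply: eq_bigr => a _.
rewrite !mxE; ring.
Qed.

Lemma BZ c x : Bf (c *: x) (c *: x) = c ^+ 2 * Bf x x.
Proof.
rewrite /Bf !mulr_sumr; apply: eq_bigr => a _.
rewrite !mulr_sumr; apply: eq_bigr => b _; rewrite !mxE; ring.
Qed.

Lemma DZ c x : Df (c *: x) (c *: x) = c ^+ 2 * Df x x.
Proof.
rewrite /Df !mulr_sumr; apply: eq_bigr => a _; rewrite !mxE; ring.
Qed.

Lemma Df_ge0 x : 0 <= Df x x.
Proof. by apply: sumr_ge0 => a _; rewrite -expr2 sqr_ge0. Qed.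

Lemma Df_eq0 x : Df x x = 0 -> x = 0.
Proof.
move=> /eqP; rewrite /Df psumr_eq0; last by move=> a _; rewrite -expr2 sqr_ge0.
move=> /allP H0; apply/rowP => a; rewrite mxE.
have := H0 a (mem_index_enum _); rewrite /= -expr2 sqrf_eq0 => /eqP.
by [].
Qed.

Lemma B0 : Bf 0 0 = 0.
Proof. by rewrite -(scale0r (0 : 'rV[R]_N)) BZ expr0n /= mul0r. Qed.

Lemma cM (T : topologicalType) (s t : T -> R) :
  continuous s -> continuous t -> continuous (fun x => s x * t x).
Proof. by move=> hs ht x; exact: (continuousM (hs x) (ht x)). Qed.

Lemma Bf_continuous : continuous (fun x => Bf x x).
Proof.
rewrite /Bf; apply: (@continuous_big R _ +%R 0 xpredT add_continuous) => a _.
apply: (@continuous_big R _ +%R 0 xpredT add_continuous) => b _.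
apply: cM; last exact: coord_continuous.
apply: cM; last exact: cst_continuous.
exact: coord_continuous.
Qed.

Lemma Df_continuous : continuous (fun x => Df x x).
Proof.
rewrite /Df; apply: (@continuous_big R _ +%R 0 xpredT add_continuous) => a _.
by apply: cM; exact: coord_continuous.
Qed.

End P3.
Section P3b.
Variable R : realType.
Variable N : nat.
Variable H : 'M[R]_N.
Hypothesis HT : forall a b, H a b = H b a.

Lemma sq_le1 (x : R) : x ^+ 2 <= 1 -> `|x| <= 1.
Proof.
move=> h; rewrite -(ler_pXn2r (n:=2)) ?nnegrE ?normr_ge0 ?ler01 //.
by rewrite expr1n real_normK ?num_real.
Qed.

Lemma Df_entry (x : 'rV[R]_N) a : x 0 a ^+ 2 <= Df x x.
Proof.
rewrite /Df (bigD1 a) //= expr2 lerDl.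
by apply: sumr_ge0 => b _; rewrite -expr2 sqr_ge0.
Qed.

Lemma min_glob (u0 : 'rV[R]_N) : Df u0 u0 = 1 ->
  (forall x, Df x x = 1 -> Bf H u0 u0 <= Bf H x x) ->
  forall x, Bf H u0 u0 * Df x x <= Bf H x x.
Proof.
move=> Su0 Hmin x.
have [d0|dn0] := eqVneq (Df x x) 0.
  by rewrite d0 mulr0 (Df_eq0 d0) B0.
have dp : 0 < Df x x by rewrite lt_def dn0 Df_ge0.
set c := (Num.sqrt (Df x x))^-1.
have c2 : c ^+ 2 = (Df x x)^-1 by rewrite /c exprVn sqr_sqrtr // ltW.
have := Hmin (c *: x); rewrite BZ DZ c2 mulVf // => /(_ erefl).
by rewrite -ler_pdivlMr // mulrC.
Qed.

Lemma rayleigh (lam : R) : (forall mu, eigenvalue H mu -> lam <= mu) ->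
  forall u, lam * Df u u <= Bf H u u.
Proof.
move=> Hl u.
have [u0|uz] := eqVneq (Df u u) 0.
  by rewrite u0 (Df_eq0 u0) B0 mulr0.
have up : 0 < Df u u by rewrite lt_def uz Df_ge0.
pose S := [set x : 'rV[R]_N | Df x x = 1].
have Sne : S !=set0.
  exists ((Num.sqrt (Df u u))^-1 *: u); rewrite /S /= DZ exprVn sqr_sqrtr ?ltW //.
  by rewrite mulVf.
have cS : compact S.
  apply: bounded_closed_compact.
    exists 1; split; first exact: num_real.
    move=> M0 M0gt x /= Sx.
    have -> : `|x| = mx_norm x by [].
    rewrite mx_normrE; apply: bigmax_le => [|[i a] _ /=].
      by apply: le_trans (ltW M0gt); exact: ler01.
    rewrite (ord1 i); apply: le_trans (ltW M0gt).
    by apply: sq_le1; rewrite -Sx; exact: Df_entry.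
  have := @Df_continuous R N; rewrite continuous_closedP => /(_ [set 1]).
  by apply; exact: closed_eq.
have cB : {within S, continuous (fun x => Bf H x x)}.
  by apply: continuous_subspaceT; exact: Bf_continuous.
have [u0 /set_mem Su0 Hmin] := compact_EVT_min Sne cS cB.
have Hmin' : forall x, Df x x = 1 -> Bf H u0 u0 <= Bf H x x.
  by move=> x Sx; apply: Hmin; exact: mem_set.
set m0 := Bf H u0 u0.
have G := min_glob Su0 Hmin'.
have key : forall h, Bf H u0 h = m0 * Df u0 h.
  move=> h; apply/eqP; rewrite -subr_eq0; apply/eqP.
  set e := Bf H u0 h - m0 * Df u0 h.
  set f := Bf H h h - m0 * Df h h.
  have P : forall s, 0 <= 2 * s * e + s ^+ 2 * f.
    move=> s; have := G (u0 + s *: h).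
    rewrite (Bexp HT) Dexp Su0 /e /f -/m0 => hh; nra.
  set t := `|f| + 1.
  have tp : 0 < t by rewrite /t ltr_wpDl ?normr_ge0.
  have ft : f - 2 * t < 0.
    rewrite /t; have := ler_norm f; have := normr_ge0 f; nra.
  set s := - e / t.
  have es : e = - s * t.
    by rewrite /s; field; rewrite gt_eqF.
  have := P s; rewrite es => hh.
  have s2 : s ^+ 2 * (f - 2 * t) >= 0 by nra.
  have : s ^+ 2 <= 0 by nra.
  have := sqr_ge0 s => h1 h2.
  have : s ^+ 2 = 0 by apply/eqP; rewrite eq_le h2 h1.
  by move/eqP; rewrite sqrf_eq0 => /eqP ->; rewrite oppr0 mul0r.
have eig : u0 *m H = m0 *: u0.
  apply/rowP => a.
  have E1 : Bf H u0 (delta_mx 0 a) = (u0 *m H) 0 a.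
    rewrite /Bf mxE; apply: eq_bigr => i _; rewrite (bigD1 a) //= big1 ?addr0.
      by rewrite mxE !eqxx mulr1.
    by move=> b /negbTE nb; rewrite mxE nb andbF mulr0.
  have E2 : Df u0 (delta_mx 0 a) = u0 0 a.
    rewrite /Df (bigD1 a) //= big1 ?addr0.
      by rewrite mxE !eqxx mulr1.
    by move=> b /negbTE nb; rewrite mxE nb andbF mulr0.
  by rewrite [RHS]mxE -E1 key E2.
have u0n : u0 != 0.
  apply/eqP => u00; move: Su0; rewrite u00 /S /= /Df big1.
    by move/eqP; rewrite eq_sym oner_eq0.
  by move=> a _; rewrite mxE mul0r.
have lm : lam <= m0 by apply: Hl; apply/eigenvalueP; exists u0.
apply: le_trans (G u); have := Df_ge0 u; rewrite -/m0; nra.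
Qed.

End P3b.
Section P4.
Variable R : realType.
Variables m p : nat.
Notation V := 'M[R]_(m, p).

Lemma line_is_derive (G : V -> R) (x a : V) (s0 : R) :
  differentiable G (x + s0 *: a) ->
  is_derive s0 1 (fun s => G (x + s *: a)) ('D_a G (x + s0 *: a)).
Proof.
move=> dG.
have E : (fun h : R => h^-1 *: (((fun s => G (x + s *: a)) \o shift s0) (h *: 1)
             - G (x + s0 *: a))) =
         (fun h : R => h^-1 *: ((G \o shift (x + s0 *: a)) (h *: a)
             - G (x + s0 *: a))).
  apply/funext => h /=; congr (_ *: (G _ - _)).
  by rewrite /shift /= scalerDl [h *: 1]mulr1 addrCA addrA.
have D : derivable G (x + s0 *: a) a by apply: diff_derivable.
by split; rewrite /derivable /derive E.
Qed.

End P4.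
Section P4b.
Variable R : realType.
Variables m p : nat.
Notation V := 'M[R]_(m, p).

Lemma mvt_step (F : V -> R) (w a b : V) (s : R) :
  0 < s ->
  (forall x y : R, 0 <= x <= s -> 0 <= y <= s ->
     differentiable F (w + x *: a + y *: b) /\
     differentiable ('D_a F) (w + x *: a + y *: b)) ->
  exists x y : R, [/\ 0 < x < s, 0 < y < s &
     F (w + s *: a + s *: b) - F (w + s *: a) - F (w + s *: b) + F w =
     s ^+ 2 * 'D_b ('D_a F) (w + x *: a + y *: b)].
Proof.
move=> s0 hd.
have pt : forall x y : R, (w + y *: b) + x *: a = w + x *: a + y *: b.
  by move=> x y; rewrite addrAC.
pose g1 := fun x : R => F ((w + s *: b) + x *: a) - F ((w + 0 *: b) + x *: a).
pose dg1 := fun x : R => 'D_a F ((w + s *: b) + x *: a) - 'D_a F ((w + 0 *: b) + x *: a).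
have g1d : forall x, 0 <= x <= s -> is_derive x 1 g1 (dg1 x).
  move=> x xs; apply: is_deriveB; apply: line_is_derive; rewrite (pt x).
    by case: (hd x s xs); rewrite ?lexx ?ltW.
  by case: (hd x 0 xs); rewrite ?lexx ?ltW.
have [x1 x1i E1] : exists2 c, c \in `]0, s[%R & g1 s - g1 0 = dg1 c * (s - 0).
  apply: (@MVT R g1 dg1 0 s).
    exact: s0.
    move=> x; rewrite in_itv /= => /andP[h1 h2]; apply: g1d.
    by rewrite ltW // ltW.
  apply: derivable_within_continuous => x; rewrite in_itv /= => /andP[h1 h2].
  by have := g1d x; rewrite h1 h2 => /(_ erefl) [].
move: x1i; rewrite in_itv /= => /andP[x1p x1s].
have x1i : 0 <= x1 <= s by rewrite !ltW.
pose h := fun y : R => 'D_a F ((w + x1 *: a) + y *: b).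
have hd' : forall y, 0 <= y <= s -> is_derive y 1 h ('D_b ('D_a F) (w + x1 *: a + y *: b)).
  move=> y ys; apply: line_is_derive.
  by case: (hd x1 y x1i ys).
have [y1 y1i E2] : exists2 c, c \in `]0, s[%R &
    h s - h 0 = 'D_b ('D_a F) (w + x1 *: a + c *: b) * (s - 0).
  apply: (@MVT R h (fun c => 'D_b ('D_a F) (w + x1 *: a + c *: b)) 0 s).
    exact: s0.
    move=> y; rewrite in_itv /= => /andP[h1 h2]; apply: hd'.
    by rewrite ltW // ltW.
  apply: (@derivable_within_continuous R R^o h `[0, s]).
  move=> y; rewrite in_itv /= => /andP[h1 h2].
  by have := hd' y; rewrite h1 h2 => /(_ erefl) [dd _]; exact: dd.
move: y1i; rewrite in_itv /= => /andP[y1p y1s].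
exists x1, y1; split; rewrite ?x1p ?x1s ?y1p ?y1s //.
have e1 : dg1 x1 = h s - h 0.
  by rewrite /dg1 /h (pt x1 s) (pt x1 0) scale0r !addr0.
move: E1; rewrite e1 E2 /g1 (pt s s) (pt 0 s) (pt 0 0) !scale0r !addr0 subr0 => E1.
transitivity (F (w + s *: a + s *: b) - F (w + s *: a) - (F (w + s *: b) - F w)).
  ring.
rewrite E1; ring.
Qed.

End P4b.
Section P4d.
Variable R : realType.
Variables m p : nat.
Notation V := 'M[R]_(m, p).

Lemma small_pt (w c1 c2 : V) (s D : R) : 0 <= s -> s * (`|c1| + `|c2|) < D ->
  forall x y : R, 0 <= x <= s -> 0 <= y <= s ->
  ball w D (w + x *: c1 + y *: c2).
Proof.
move=> s0 sD x y /andP[x0 xs] /andP[y0 ys].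
rewrite -ball_normE /ball_ /= -addrA opprD addrA subrr add0r normrN.
apply: le_lt_trans (ler_normD _ _) _.
rewrite !normrZ !ger0_norm //; apply: le_lt_trans sD.
rewrite mulrDr; apply: lerD; apply: ler_wpM2r => //; exact: normr_ge0.
Qed.

Lemma arith1 (c A B C D X Y : R) : c != 0 -> A - B - C + D = c * X ->
  A - C - B + D = c * Y -> X = Y.
Proof. move=> cn h1 h2; apply: (mulfI cn); rewrite -h1 -h2; ring. Qed.

Lemma arith2 (u1 u2 v1 v2 e : R) : e = `|u1 - u2| / 3 -> u1 != u2 ->
  `|u1 - v1| < e -> `|u2 - v2| < e -> v1 = v2 -> False.
Proof.
move=> -> ne l1 l2 eq; move: l1; rewrite eq => l1.
have t : `|u1 - u2| <= `|u1 - v2| + `|u2 - v2|.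
  have -> : u1 - u2 = (u1 - v2) - (u2 - v2) by ring.
  exact: ler_normB.
have : 0 < `|u1 - u2| by rewrite normr_gt0 subr_eq0.
lra.
Qed.

Lemma mixed_sym (F : V -> R) (U : set V) (w a b : V) :
  open U -> U w -> thrice_diff_on F U ->
  'D_b ('D_a F) w = 'D_a ('D_b F) w.
Proof.
move=> oU Uw hU.
have /nbhs_ballP[d dp Bd] : nbhs w U by move: oU; rewrite openE => /(_ w Uw).
set f1 := 'D_b ('D_a F); set f2 := 'D_a ('D_b F).
have c1 : {for w, continuous f1}.
  by apply: differentiable_continuous; case: (hU w Uw) => _ _ /(_ a b).
have c2 : {for w, continuous f2}.
  by apply: differentiable_continuous; case: (hU w Uw) => _ _ /(_ b a).
have [//|ne] := eqVneq (f1 w) (f2 w).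
exfalso.
set e := `|f1 w - f2 w| / 3.
have ep : 0 < e by rewrite divr_gt0 // normr_gt0 subr_eq0.
have h1 := cvgr_dist_lt f1 (f1 w) c1 e ep.
have : nbhs w (fun t => `|f1 w - f1 t| < e) by exact: h1.
case/nbhs_ballP => d1 d1p B1.
have h2 := cvgr_dist_lt f2 (f2 w) c2 e ep.
have : nbhs w (fun t => `|f2 w - f2 t| < e) by exact: h2.
case/nbhs_ballP => d2 d2p B2.
set D := Num.min d (Num.min d1 d2).
have Dp : 0 < D by rewrite /D !lt_min dp d1p d2p.
set K := `|a| + `|b| + 1.
have Kp : 0 < K by rewrite /K ltr_wpDl // addr_ge0 // normr_ge0.
set s := D / (2 * K).
have sp : 0 < s by rewrite /s divr_gt0 // mulr_gt0.
have sK : s * (`|a| + `|b|) < D.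
  apply: (@le_lt_trans _ _ (s * K)).
    by apply: ler_wpM2l; [exact: ltW | rewrite /K lerDl].
  rewrite /s invfM mulrA -mulrA mulVf ?gt_eqF // mulr1.
  by rewrite ltr_pdivrMr // ltr_pMr // ltr1n.
have sK' : s * (`|b| + `|a|) < D by rewrite addrC.
have inD : forall z, ball w D z -> [/\ ball w d z, ball w d1 z & ball w d2 z].
  move=> z; rewrite -ball_normE /ball_ /= => hz; split.
  - by apply: lt_le_trans hz _; rewrite /D ge_min lexx.
  - by apply: lt_le_trans hz _; rewrite /D !ge_min lexx orbT.
  - by apply: lt_le_trans hz _; rewrite /D !ge_min lexx !orbT.
have [x1 [y1 [hx1 hy1 E1]]] := @mvt_step R m p F w a b s sp
  (fun x y hx hy =>
   match inD _ (small_pt w (ltW sp) sK hx hy) with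
   | And3 h _ _ => match hU _ (Bd _ h) with And3 h1 h2 _ => conj h1 (h2 a) end end).
have [x2 [y2 [hx2 hy2 E2]]] := @mvt_step R m p F w b a s sp
  (fun x y hx hy =>
   match inD _ (small_pt w (ltW sp) sK' hx hy) with
   | And3 h _ _ => match hU _ (Bd _ h) with And3 h1 h2 _ => conj h1 (h2 b) end end).
have w1 : 0 <= x1 <= s by case/andP: hx1 => h h'; rewrite !ltW.
have w1' : 0 <= y1 <= s by case/andP: hy1 => h h'; rewrite !ltW.
have w2 : 0 <= x2 <= s by case/andP: hx2 => h h'; rewrite !ltW.
have w2' : 0 <= y2 <= s by case/andP: hy2 => h h'; rewrite !ltW.
have [_ q1 _] := inD _ (small_pt w (ltW sp) sK w1 w1').
have [_ _ q2] := inD _ (small_pt w (ltW sp) sK' w2 w2').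
have l1 := B1 _ q1.
have l2 := B2 _ q2.
have s2n : s ^+ 2 != 0 by rewrite expf_neq0 // gt_eqF.
have pteq : w + s *: b + s *: a = w + s *: a + s *: b by exact: addrAC.
have E2' := E2; rewrite pteq in E2'.
have eq12 := arith1 s2n E1 E2'.
exact: (arith2 (erefl e) ne l1 l2 eq12).
Qed.

End P4d.
Section P5.
Variable R : realType.
Variables m p : nat.

Lemma sum_mxvec (G : 'I_(m * p) -> R) :
  \sum_a G a = \sum_i \sum_j G (mxvec_index i j).
Proof.
rewrite (reindex (uncurry (@mxvec_index m p))) /=; last exact: curry_mxvec_bij.
by rewrite pair_bigA; apply: eq_bigr => -[i j] _.
Qed.

Lemma Df_mxvec (u : 'M[R]_(m, p)) : Df (mxvec u) (mxvec u) = ns u.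
Proof.
rewrite /Df sum_mxvec /ns; apply: eq_bigr => i _; apply: eq_bigr => j _.
by rewrite mxvecE expr2.
Qed.

Lemma mdot_abs (A B : 'M[R]_(m, p)) : `|mdot A B| <= enorm A * enorm B.
Proof.
rewrite !enormE -sqrtrM ?ns_ge0 //.
rewrite -sqrtr_sqr; apply: ler_wsqrtr; exact: mdot_sq.
Qed.

Lemma vec_mx_norm (d : 'rV[R]_(m * p)) : `|vec_mx d| <= `|d|.
Proof.
have -> : `|vec_mx d| = mx_norm (vec_mx d) by [].
rewrite mx_normrE; apply: bigmax_le => [|[i j] _ /=]; first exact: normr_ge0.
by rewrite mxE; exact: entry_mx_norm.
Qed.

Lemma vec_mx_cont : continuous (@vec_mx R m p).
Proof.
move=> y; apply/(@cvgrPdist_lt _ _ _ (nbhs y)) => e ep; near=> z.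
have -> : vec_mx y - vec_mx z = vec_mx (y - z).
  by apply/matrixP => i j; rewrite !mxE.
apply: le_lt_trans (vec_mx_norm _) _.
by near: z; exact: cvgr_dist_lt.
Unshelve. all: by end_near. Qed.

Lemma vec_mx_shift_cont (w : 'M[R]_(m, p)) :
  continuous (fun y : 'rV[R]_(m * p) => vec_mx y - w).
Proof.
move=> y; apply/(@cvgrPdist_lt _ _ _ (nbhs y)) => e ep; near=> z.
have -> : vec_mx y - w - (vec_mx z - w) = vec_mx (y - z).
  by apply/matrixP => i j; rewrite !mxE opprB addrA subrK.
apply: le_lt_trans (vec_mx_norm _) _.
by near: z; exact: cvgr_dist_lt.
Unshelve. all: by end_near. Qed.

End P5.
Theorem lemma1 (R : realType) (k n : nat) (v : 'M[R]_(k, k))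
  (w : 'M[R]_(n, k)) (alpha eps B lam : R) :
  v *m v^T = 1%:M ->
  0 < alpha ->
  (exists U : set 'M[R]_(n, k),
     [/\ open U, (forall x, enorm (x - w) <= alpha -> U x)
       & thrice_diff_on (Fobj v) U]) ->
  0 < eps -> 0 < B ->
  enorm (grad (Fobj v) w) <= eps ->
  (forall (t : R) (u : 'M[R]_(n, k)), 0 < t <= alpha -> enorm u = 1 ->
     `|lagrange_rem (Fobj v) w u t| <= B) ->
  eigenvalue (hess (Fobj v) w) lam ->
  (forall mu, eigenvalue (hess (Fobj v) w) mu -> lam <= mu) ->
  0 < lam ->
  0 <= 9 * lam ^+ 2 - 25 * B * eps ->
  (3 * lam - Num.sqrt (9 * lam ^+ 2 - 25 * B * eps)) / (2 * B) < alpha ->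
  exists ws : 'M[R]_(n, k),
    enorm (ws - w) <= (3 * lam - Num.sqrt (9 * lam ^+ 2 - 25 * B * eps)) / (2 * B)
    /\ local_min (Fobj v) ws.
Proof.
move=> _ alpha0 [U [oU Uball hT]] eps0 B0 hg hrem _ hmin lam0 D0 rlt.
move: hg hrem hmin hT Uball.
move: (Fobj v) => F hg hrem hmin hT Uball.
move: D0 rlt; set S := Num.sqrt _ => D0 rlt.
move: rlt; set r := (3 * lam - S) / (2 * B) => rlt.
have S0 : 0 <= S := sqrtr_ge0 _.
have S2 : S ^+ 2 = 9 * lam ^+ 2 - 25 * B * eps := sqr_sqrtr D0.
have Be : 0 < B * eps by exact: mulr_gt0.
have S3 : S < 3 * lam by nra.
have B2 : 0 < 2 * B by exact: mulr_gt0.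
have r0 : 0 < r by rewrite /r divr_gt0 // subr_gt0.
have hr : r * (2 * B) = 3 * lam - S by rewrite /r divfK // gt_eqF.
have key : 0 < 3 * r * lam - r ^+ 2 * B - 6 * eps.
  have E : 4 * B * (3 * r * lam - r ^+ 2 * B) = 25 * B * eps.
    have -> : 4 * B * (3 * r * lam - r ^+ 2 * B) =
      6 * lam * (r * (2 * B)) - (r * (2 * B)) ^+ 2 by ring.
    rewrite hr; transitivity (9 * lam ^+ 2 - S ^+ 2); first ring.
    by rewrite S2; ring.
  nra.
have rle : r <= alpha := ltW rlt.
have e0 : enorm (0 : 'M[R]_(n, k)) = 0.
  by rewrite -(scale0r (0 : 'M[R]_(n, k))) enormZ normr0 mul0r.
have Uw : U w by apply: Uball; rewrite subrr e0 ltW.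
have HT' : forall a b, hess F w a b = hess F w b a.
  by move=> a b; rewrite !mxE; exact: (mixed_sym _ _ oU Uw hT).
have sphere : forall x, enorm (x - w) = r -> F w < F x.
  move=> x hx.
  set u := r^-1 *: (x - w).
  have nu : enorm u = 1.
    by rewrite /u enormZ hx ger0_norm ?invr_ge0 ?ltW // mulVf // gt_eqF.
  have xu : x = w + r *: u.
    by rewrite /u scalerA divff ?gt_eqF // scale1r addrC subrK.
  have hb := hrem r u (introT andP (conj r0 rle)) nu.
  rewrite /lagrange_rem -xu in hb.
  have hq : lam <= quadf (hess F w) u.
    rewrite /quadf qfE.
    have := rayleigh HT' hmin (mxvec u).
    by rewrite Df_mxvec -sqr_enorm nu expr1n mulr1.
  have hgu : - eps <= mdot (grad F w) u.
    have h1 := mdot_abs (grad F w) u.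
    have h2 := ler_norm (- mdot (grad F w) u).
    rewrite normrN nu mulr1 in h1 h2 *.
    lra.
  move: hb hq hgu.
  set q := quadf _ _.
  set g := mdot _ _.
  set X := F x - F w - _ - _.
  move=> hb hq hgu.
  have r3 : 0 < r ^+ 3 by exact: exprn_gt0.
  have hX : - B * r ^+ 3 <= 6 * X.
    move: hb; rewrite ler_norml => /andP[hb _].
    by move: hb; rewrite mulrAC ler_pdivlMr // mulNr.
  have p1 : r * (- eps) <= r * g by rewrite ler_wpM2l // ltW.
  have p2 : r ^+ 2 * lam <= r ^+ 2 * q by rewrite ler_wpM2l // exprn_ge0 // ltW.
  have p3 : 0 < r * (3 * r * lam - r ^+ 2 * B - 6 * eps) by exact: mulr_gt0.
  have EX : F x - F w = X + r * g + 2^-1 * r ^+ 2 * q.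
    by rewrite /X; ring.
  have r3e : r ^+ 3 = r * r ^+ 2 by rewrite exprS.
  rewrite -subr_gt0 EX.
  nra.
pose K' := [set y : 'rV[R]_(n * k) | enorm (vec_mx y - w) <= r].
have cvm : continuous (fun y : 'rV[R]_(n * k) => enorm (vec_mx y - w)).
  move=> y.
  apply: (@continuous_comp _ _ _ (fun y => vec_mx y - w) (@enorm R n k)).
    exact: vec_mx_shift_cont.
  exact: enorm_continuous.
have clK : closed K'.
  by have := cvm; rewrite continuous_closedP => /(_ _ (closed_le (y := r))).
have bK : bounded_set K'.
  exists (r + enorm w); split; first exact: num_real.
  move=> M0 hM y /= Ky.
  have -> : `|y| = mx_norm y by [].
  rewrite mx_normrE; apply: bigmax_le => [|[i a] _ /=].
    by apply: ltW; apply: le_lt_trans hM; apply: addr_ge0; [exact: ltW | exact: enorm_ge0].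
  rewrite (ord1 i); case: (mxvec_indexP a) => i' j'.
  have -> : y 0 (mxvec_index i' j') = vec_mx y i' j' by rewrite mxE.
  apply: ltW; apply: le_lt_trans hM.
  have -> : vec_mx y i' j' = (vec_mx y - w) i' j' + w i' j' by rewrite !mxE subrK.
  apply: le_trans (ler_normD _ _) _; apply: lerD; last exact: entry_norm_le.
  by apply: le_trans (entry_norm_le _ i' j') _; exact: Ky.
have cK : compact K' by exact: bounded_closed_compact.
have K'ne : K' !=set0 by exists (mxvec w); rewrite /K' /= mxvecK subrr e0 ltW.
have cG : {within K', continuous (fun y => F (vec_mx y))}.
  apply: continuous_in_subspaceT => y /set_mem Ky.
  apply: (@continuous_comp _ _ _ (@vec_mx R n k) F); first exact: vec_mx_cont.
  apply: differentiable_continuous.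
  have : U (vec_mx y) by apply: Uball; apply: le_trans rle.
  by move=> /hT [].
have [c' /set_mem Kc' hminc] := compact_EVT_min K'ne cK cG.
set c := vec_mx c'.
have minK : forall x, enorm (x - w) <= r -> F c <= F x.
  move=> x hx; have := hminc (mxvec x); rewrite mxvecK; apply.
  by apply: mem_set; rewrite /K' /= mxvecK.
have Fcw : F c <= F w by apply: minK; rewrite subrr e0 ltW.
have Kc : enorm (c - w) <= r := Kc'.
have ltc : enorm (c - w) < r.
  rewrite lt_neqAle Kc andbT; apply/eqP => h.
  by have := sphere c h; lra.
exists c; split; first exact: Kc.
exists (r - enorm (c - w)); first by rewrite subr_gt0.
move=> w' hw'; apply: minK.
have := enormD (w' - c) (c - w); rewrite addrA subrK.
lra.
Qed.
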